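(* Let $n\ge1$ and let $\mathfrak{c}=\{c_{ij}\}_{1\le i<j\le n}$, $\mathfrak{\ell}=\{\ell_1,\dots,\ell_n\}$ be integers. If the Grossberg–Karshon twisted cube $(C(\mathfrak{c},\mathfrak{\ell}),\rho)$ is untwisted, then $\ell_i\ge0$ for all $1\le i\le n$.
   Context: $A_n(x)=\ell_n$, $A_j(x)=\ell_j-\sum_{k=j+1}^nc_{jk}x_k$ for $1\le j\le n-1$. $C(\mathfrak{c},\mathfrak{\ell})=\{x\in\mathbb{R}^n:$ for each $1\le k\le n$, $A_k(x)<x_k<0$ or $0\le x_k\le A_k(x)\}$; $\rho(x)=(-1)^n\prod_k\mathrm{sgn}(x_k)$ on $C(\mathfrak{c},\mathfrak{\ell})$, $0$ elsewhere ($\mathrm{sgn}(t)=1$ for $t<0$, $-1$ for $t\ge0$). The twisted cube is untwisted if $C(\mathfrak{c},\mathfrak{\ell})$ is closed in $\mathbb{R}^n$ (equivalently, $C(\mathfrak{c},\mathfrak{\ell})=\{x:0\le x_j\le A_j(x)\ \forall j\}$). *)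

(* Defs.v *)
(* R : realType, R^n as 'rV[R]_n with its canonical
   (product/matrix) topology from normedtype. Indices are 0-based ('I_n). *)
From HB Require Import structures.
From mathcomp Require Import all_boot all_order all_algebra.
From mathcomp Require Import all_classical all_reals all_analysis.
Set Implicit Arguments. Unset Strict Implicit. Unset Printing Implicit Defensive.
Import Order.TTheory GRing.Theory Num.Theory.
Import numFieldNormedType.Exports.
Local Open Scope classical_set_scope.
Local Open Scope ring_scope.

Definition twA (R : realType) (n : nat) (c : 'I_n -> 'I_n -> int)
  (l : 'I_n -> int) (j : 'I_n) (x : 'rV[R]_n) : R :=
  (l j)%:~R - \sum_(k < n | (j < k)%N) (c j k)%:~R * x ord0 k.

Definition twC (R : realType) (n : nat) (c : 'I_n -> 'I_n -> int)
  (l : 'I_n -> int) : set 'rV[R]_n :=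
  [set x | forall k : 'I_n,
     (twA c l k x < x ord0 k < 0) \/ (0 <= x ord0 k <= twA c l k x)].

Definition twsgn (R : realType) (t : R) : R := if t < 0 then 1 else -1.

Definition twrho (R : realType) (n : nat) (c : 'I_n -> 'I_n -> int)
  (l : 'I_n -> int) (x : 'rV[R]_n) : R :=
  if `[< twC c l x >] then (-1) ^+ n * \prod_(k < n) twsgn (x ord0 k) else 0.

Definition untwisted (R : realType) (n : nat) (c : 'I_n -> 'I_n -> int)
  (l : 'I_n -> int) : Prop := closed (twC (R:=R) c l).

(* Main.v *)
Require Import Defs.
From HB Require Import structures.
From mathcomp Require Import all_boot all_order all_algebra.
From mathcomp Require Import all_classical all_reals all_analysis.
From mathcomp Require Import lra zify.
Import Order.TTheory GRing.Theory Num.Theory.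
Import numFieldNormedType.Exports.
Local Open Scope classical_set_scope.
Local Open Scope ring_scope.

Section Aux.
Variables (R : realType) (n : nat) (c : 'I_n -> 'I_n -> int) (l : 'I_n -> int).

Definition bet (a : 'rV[R]_n) (k : 'I_n) : R :=
  - \sum_(j < n | (k < j)%N) (c k j)%:~R * a ord0 j.

Lemma twA_scale (a : 'rV[R]_n) k t :
  twA c l k (t *: a) = (l k)%:~R + t * bet a k.
Proof.
rewrite /twA /bet mulrN; congr (_ - _); rewrite mulr_sumr.
by apply: eq_bigr => j _; rewrite mxE mulrCA.
Qed.

Definition cnd (a : 'rV[R]_n) (k : 'I_n) (t : R) : Prop :=
  ((l k)%:~R + t * bet a k < t * a ord0 k < 0) \/
  (0 <= t * a ord0 k <= (l k)%:~R + t * bet a k).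

Lemma cndE a k t : cnd a k t <->
  ((twA c l k (t *: a) < (t *: a) ord0 k < 0) \/
   (0 <= (t *: a) ord0 k <= twA c l k (t *: a))).
Proof. by rewrite twA_scale mxE. Qed.

Lemma ex_alpha m : (m <= n)%N -> exists a : 'rV[R]_n, exists2 d : R, 0 < d &
  forall k : 'I_n, (n - m <= k)%N -> forall t, -d < t -> t < 0 -> cnd a k t.
Proof.
elim: m => [_|m IH Hm].
  exists 0, 1 => // k; rewrite subn0 => H; have := ltn_ord k; lia.
have [a [d d0 Ha]] := IH (ltnW Hm).
have Hk : (n - m.+1 < n)%N by lia.
pose k := Ordinal Hk.
pose b := bet a k.
pose v : R := if (1 <= l k)%R then 0 else if (l k <= -1)%R then 1
              else if 0 < b then b / 2 else 0.
pose a' : 'rV[R]_n := \row_j (if j == k then v else a ord0 j).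
have d1 : 0 < 1 / (1 + `|b|) by rewrite divr_gt0 // ltr_pwDl.
exists a', (Num.min d (1 / (1 + `|b|))); first by rewrite lt_min d0.
move=> k' Hk' t Ht t0.
have Hd1 : -d < t by apply: le_lt_trans Ht; rewrite lerN2 ge_min lexx.
have Hd2 : - (1 / (1 + `|b|)) < t.
  by apply: le_lt_trans Ht; rewrite lerN2 ge_min lexx orbT.
have [Ek|Nk] := eqVneq k' k.
  rewrite Ek /cnd mxE eqxx.
  have -> : bet a' k = b.
    rewrite /b /bet; congr (- _); apply: eq_bigr => j Hj; rewrite mxE.
    by case: eqP => // Ej; move: Hj; rewrite Ej ltnn.
  have Hb1 : - `|b| <= b <= `|b| by rewrite -ler_norml.
  have tb : t * (1 + `|b|) > -1.
    move: Hd2; rewrite ltrNl ltr_pdivlMr ?ltr_pwDl // => H; lra.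
  rewrite /v; case: ifP => [H1|/negbT H1].
    right; rewrite mulr0 lexx /=.
    have : 1 <= (l k)%:~R :> R by rewrite ler1z.
    nra.
  case: ifP => [H2|/negbT H2].
    left; rewrite mulr1 t0 andbT.
    have : (l k)%:~R <= -1 :> R by rewrite -(ler_int R) in H2.
    nra.
  have -> : l k = 0 by move: H1 H2; rewrite -!ltNge; lia.
  rewrite add0r; case: ifP => [bp|/negbT bp].
    left; apply/andP; split; nra.
  right; rewrite mulr0 lexx /=; move: bp; rewrite -leNgt => bp; nra.
have Hk2 : (n - m <= k')%N by move: Hk' Nk; rewrite -val_eqE /=; lia.
have Hkk : (k < k')%N by move: Hk' Nk; rewrite -val_eqE /=; lia.
have := Ha k' Hk2 t Hd1 t0; rewrite /cnd.
have -> : bet a' k' = bet a k'.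
  rewrite /bet; congr (- _); apply: eq_bigr => j Hj; rewrite mxE.
  by case: eqP => // Ej; move: Hj Hkk; rewrite Ej; lia.
by rewrite mxE (negbTE Nk).
Qed.
End Aux.

Theorem lemma3p1 (R : realType) (n : nat) (c : 'I_n -> 'I_n -> int)
  (l : 'I_n -> int) :
  (1 <= n)%N -> untwisted R c l -> forall i : 'I_n, 0 <= l i.
Proof.
move=> _ Hcl i; rewrite leNgt; apply/negP => li.
have [a [d d0 Ha]] := @ex_alpha R n c l n (leqnn n).
have C0 : twC c l (0 *: a).
  apply: (@closed_cvg R _ (0:R)^'- _ (fun t : R => t *: a) _ Hcl).
    near=> t => k; apply/(@cndE R n c l); apply: Ha.
    - by rewrite subnn.
    - by near: t; apply: nbhs_left_gt; rewrite oppr_lt0.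
    - by near: t; exact: nbhs_left_lt.
  apply: cvg_at_left_filter; apply: cvgZr_tmp; exact: cvg_id.
have := C0 i; rewrite -(@cndE R n c l) /cnd !mul0r addr0 ltxx /=.
have : (l i)%:~R < 0 :> R by rewrite ltrz0.
move=> H [|/andP [_ H2]]; first by rewrite andbF.
by move: (le_lt_trans H2 H); rewrite ltxx.
Unshelve. all: by end_near.
Qed.
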